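(* (i) Let $a,b,c\in\mathbb{R}$ be such that $$B=\begin{pmatrix}1&a&b\\ a&1&c\\ b&c&1\end{pmatrix}$$ is positive semidefinite. Then $$\big|\,|a|-|b|\,\big|\le\sqrt{1-|c|^2}\le\sqrt2\,\sqrt{1-|c|},$$ and for every real $k\ge2$, $$\big|\,|a|^k-|b|^k\,\big|\le\sqrt{1-|c|^k}.$$ (ii) If $0\le\alpha,\beta,\gamma\le\pi/2$ and $|\alpha-\beta|\le\gamma\le\alpha+\beta$, then for every integer $k\ge1$, $$|\cos^k\alpha-\cos^k\beta|\le\sqrt{k}\,\sin\gamma.$$ *)

(* Defs.v *)
From Stdlib Require Import Reals.
Open Scope R_scope.

(* A real 3x3 matrix, given as a function of row/column indices in {0,1,2}. *)
Definition mat3 := nat -> nat -> R.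

Definition Bmat (a b c : R) : mat3 := fun i j =>
  match i, j with
  | 0, 0 => 1 | 0, 1 => a | 0, 2 => b
  | 1, 0 => a | 1, 1 => 1 | 1, 2 => c
  | 2, 0 => b | 2, 1 => c | 2, 2 => 1
  | _, _ => 0
  end.

Definition psd3 (M : mat3) : Prop :=
  forall x : nat -> R,
    0 <= sum_f_R0 (fun i => sum_f_R0 (fun j => x i * M i j * x j) 2) 2.

(* x^k for x >= 0 and real exponent k > 0, with the convention 0^k = 0
   (Stdlib's Rpower is exp (k * ln x), which gives 1 at x = 0). *)
Definition rpow (x k : R) : R :=
  if Req_EM_T x 0 then 0 else Rpower x k.

(* Main.v *)
Require Import Defs.
From Stdlib Require Import Reals Lra Lia Psatz.
From Coquelicot Require Import Coquelicot.
Open Scope R_scope.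
Lemma rpow_pos x k : 0 < x -> rpow x k = exp (k * ln x).
Proof. intros H. unfold rpow, Rpower. destruct (Req_EM_T x 0); [lra | reflexivity]. Qed.
Lemma rpow_0 k : rpow 0 k = 0.
Proof. unfold rpow. destruct (Req_EM_T 0 0); [reflexivity | lra]. Qed.
Lemma rpow_nonneg x k : 0 <= rpow x k.
Proof. unfold rpow. destruct (Req_EM_T x 0); [lra | left; apply exp_pos]. Qed.
Lemma rpow_cases x k : 0 <= x -> (x = 0 /\ rpow x k = 0) \/ (0 < x /\ rpow x k = exp (k * ln x)).
Proof.
  intros H. destruct (Req_EM_T x 0) as [h|h].
  - left. subst. split; [reflexivity| apply rpow_0].
  - right. split; [lra| apply rpow_pos; lra].
Qed.
Lemma exp_le' x y : x <= y -> exp x <= exp y.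
Proof. intros [H|H]; [left; apply exp_increasing; auto | subst; lra]. Qed.
Lemma ln_le' x y : 0 < x -> x <= y -> ln x <= ln y.
Proof. intros Hx [H|H]; [left; apply ln_increasing; auto | subst; lra]. Qed.
Lemma ln_nonpos x : 0 < x -> x <= 1 -> ln x <= 0.
Proof. intros. rewrite <- ln_1. apply ln_le'; lra. Qed.

Lemma rpow_le1 x k : 0 <= x <= 1 -> 0 <= k -> rpow x k <= 1.
Proof.
  intros Hx Hk. destruct (rpow_cases x k) as [[_ E]|[P E]]; [lra|lra|]. rewrite E.
  rewrite <- exp_0. apply exp_le'. pose proof (ln_nonpos x P (proj2 Hx)). nra.
Qed.
Lemma rpow_mono x y k : 0 <= x <= y -> 0 <= k -> rpow x k <= rpow y k.
Proof.
  intros Hx Hk. destruct (rpow_cases x k) as [[_ E]|[P E]]; [lra| rewrite E; apply rpow_nonneg|].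
  rewrite E, rpow_pos by lra. apply exp_le'. apply Rmult_le_compat_l; [lra|]. apply ln_le'; lra.
Qed.
Lemma rpow_sq x t : 0 <= x -> rpow x (2*t) = rpow x t ^ 2.
Proof.
  intros Hx. destruct (rpow_cases x t) as [[h E]|[P E]]; [lra| subst; rewrite !rpow_0; ring|].
  rewrite E, rpow_pos by lra. rewrite <- Rsqr_pow2. unfold Rsqr. rewrite <- exp_plus. f_equal; ring.
Qed.
Lemma rpow_sq_base x t : 0 <= x -> rpow x t ^ 2 = rpow (x^2) t.
Proof.
  intros Hx. destruct (rpow_cases x t) as [[h E]|[P E]]; [lra| subst; rewrite pow_i by lia; rewrite !rpow_0; ring|].
  rewrite E, (rpow_pos (x^2)) by (apply pow_lt; lra). rewrite ln_pow by lra.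
  rewrite <- Rsqr_pow2. unfold Rsqr. rewrite <- exp_plus. f_equal. simpl INR. ring.
Qed.
Lemma rpow_le_self x t : 0 <= x <= 1 -> 1 <= t -> rpow x t <= x.
Proof.
  intros Hx Ht. destruct (rpow_cases x t) as [[h E]|[P E]]; [lra| lra|].
  rewrite E. rewrite <- (exp_ln x) at 2 by lra. apply exp_le'.
  pose proof (ln_nonpos x P (proj2 Hx)). nra.
Qed.
Lemma rpow_1 t : rpow 1 t = 1.
Proof. rewrite rpow_pos by lra. rewrite ln_1, Rmult_0_r. apply exp_0. Qed.
Lemma rpow_nat x n : 0 <= x -> (1 <= n)%nat -> rpow x (INR n) = x ^ n.
Proof.
  intros Hx Hn. destruct (rpow_cases x (INR n)) as [[h E]|[P E]]; [lra| subst; rewrite E, pow_i by lia; ring|].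
  unfold rpow. destruct (Req_EM_T x 0); [lra|]. apply Rpower_pow; lra.
Qed.

Lemma ln_le_sub1 r : 0 < r -> ln r <= r - 1.
Proof. intros Hr. pose proof (exp_ineq1_le (ln r)). rewrite exp_ln in H; lra. Qed.

Definition myvec3 (p q r : R) : nat -> R := fun i => match i with 0%nat => p | 1%nat => q | _ => r end.

Lemma psd_form a b c : psd3 (Bmat a b c) -> forall p q r,
  0 <= p*p + q*q + r*r + 2*a*p*q + 2*b*p*r + 2*c*q*r.
Proof.
  intros H p q r. specialize (H (myvec3 p q r)). simpl in H. lra.
Qed.

Lemma psd_facts a b c : psd3 (Bmat a b c) ->
  a^2 <= 1 /\ b^2 <= 1 /\ c^2 <= 1 /\ (c - a*b)^2 <= (1-a^2)*(1-b^2).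
Proof.
  intros H. pose proof (psd_form _ _ _ H) as F.
  pose proof (F 1 1 0). pose proof (F 1 (-1) 0).
  pose proof (F 1 0 1). pose proof (F 1 0 (-1)).
  pose proof (F 0 1 1). pose proof (F 0 1 (-1)).
  assert (Ha: a^2 <= 1) by nra. assert (Hb: b^2 <= 1) by nra.
  repeat split; try nra.
  assert (G: forall q r, 0 <= (1-a^2)*q*q + (1-b^2)*r*r + 2*(c-a*b)*q*r).
  { intros q r. pose proof (F (-(a*q+b*r)) q r). nra. }
  destruct (Rle_lt_or_eq_dec 0 (1-a^2)) as [HA|HA]; [lra| |].
  - pose proof (G (-(c-a*b)) (1-a^2)). nra.
  - pose proof (G (-((1-b^2)+1)*(c-a*b)) ((c-a*b)^2)) as K.
    rewrite <- HA in K. set (D := c - a*b) in *. set (B := 1 - b^2) in *.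
    assert (E: 0 <= -(B+2)*(D^2*D^2)) by lra.
    assert (0 <= B) by (unfold B; lra).
    assert (D^2*D^2 <= 0) by nra.
    assert (D^2 = 0) by nra. rewrite <- HA. lra.
Qed.

Lemma sq_sqrt1 x : x^2 <= 1 -> sqrt (1 - x^2) ^ 2 = 1 - x^2 /\ 0 <= sqrt (1 - x^2).
Proof. intros H. split; [rewrite <- Rsqr_pow2; apply Rsqr_sqrt; lra | apply sqrt_pos]. Qed.

Lemma zbound a b c : a^2 <= 1 -> b^2 <= 1 -> (c - a*b)^2 <= (1-a^2)*(1-b^2) ->
  Rabs c <= Rabs a * Rabs b + sqrt (1 - Rabs a ^ 2) * sqrt (1 - Rabs b ^ 2).
Proof.
  intros Ha Hb H. rewrite !pow2_abs.
  assert (Rabs (c - a*b) <= sqrt (1-a^2) * sqrt (1-b^2)).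
  { rewrite <- sqrt_mult by lra. rewrite <- (sqrt_pow2 (Rabs (c-a*b))) by apply Rabs_pos.
    apply sqrt_le_1_alt. rewrite pow2_abs. lra. }
  rewrite <- Rabs_mult.
  replace c with (a*b + (c - a*b)) at 1 by ring.
  eapply Rle_trans; [apply Rabs_triang| lra].
Qed.

Lemma L1 x y z : 0 <= x <= 1 -> 0 <= y <= 1 -> 0 <= z ->
  z <= x*y + sqrt (1 - x^2) * sqrt (1 - y^2) -> (x - y)^2 <= 1 - z^2.
Proof.
  intros Hx Hy Hz H.
  destruct (sq_sqrt1 x) as [E1 P1]; [nra|]. destruct (sq_sqrt1 y) as [E2 P2]; [nra|].
  set (sx := sqrt (1-x^2)) in *. set (sy := sqrt (1-y^2)) in *.
  assert (0 <= (x-y)^2 + (sx-sy)^2) by (pose proof (pow2_ge_0 (x-y)); pose proof (pow2_ge_0 (sx-sy)); lra).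
  assert (K: x*y + sx*sy <= 1) by lra.
  assert (0 <= x*y + sx*sy) by nra.
  assert (z^2 <= (x*y+sx*sy)^2) by nra.
  assert (0 <= x*y*(1 - x*y - sx*sy)) by (apply Rmult_le_pos; nra).
  assert (sx^2*sy^2 = (1-x^2)*(1-y^2)) by (rewrite E1, E2; ring).
  lra.
Qed.

Lemma L2 x y z : 0 <= x <= 1 -> 0 <= y <= 1 -> 0 <= z ->
  z <= x*y + sqrt (1 - x^2) * sqrt (1 - y^2) -> (x^2 - y^2)^2 + z^2 <= 1.
Proof.
  intros Hx Hy Hz H.
  destruct (sq_sqrt1 x) as [E1 P1]; [nra|]. destruct (sq_sqrt1 y) as [E2 P2]; [nra|].
  set (sx := sqrt (1-x^2)) in *. set (sy := sqrt (1-y^2)) in *.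
  assert (z^2 <= (x*y+sx*sy)^2) by nra.
  assert (1 - (x*y+sx*sy)^2 - (x^2-y^2)^2 = (x*sx - y*sy)^2).
  { assert (sx^2*sy^2 = (1-x^2)*(1-y^2)) by (rewrite E1, E2; ring).
    assert (x^2*sx^2 = x^2*(1-x^2)) by (rewrite E1; ring).
    assert (y^2*sy^2 = y^2*(1-y^2)) by (rewrite E2; ring).
    lra. }
  pose proof (pow2_ge_0 (x*sx - y*sy)). lra.
Qed.

Lemma tangent s v m : 0 < v -> 0 < m -> 0 <= s ->
  exp (-s*ln m) - s*exp(-s*ln m)/m*(v-m) <= exp (-s*ln v).
Proof.
  intros Hv Hm Hs.
  replace (-s*ln v) with (-s*ln m + -s*ln (v/m)).
  2:{ unfold Rdiv. rewrite ln_mult, ln_Rinv by (try apply Rinv_0_lt_compat; lra). ring. }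
  rewrite exp_plus.
  pose proof (exp_ineq1_le (-s*ln (v/m))).
  pose proof (ln_le_sub1 (v/m)).
  assert (0 < v/m) by (apply Rdiv_lt_0_compat; lra).
  specialize (H0 H1).
  pose proof (exp_pos (-s*ln m)).
  assert (1 - s*(v/m-1) <= exp (-s*ln (v/m))) by nra.
  replace (exp (-s*ln m) - s*exp(-s*ln m)/m*(v-m)) with (exp (-s*ln m) * (1 - s*(v/m-1)))
    by (field; lra).
  apply Rmult_le_compat_l; lra.
Qed.

Lemma slope s u2 u1 : 0 < u2 -> u2 <= u1 -> u1 < 1 -> 0 <= s ->
  (1-u2)*(exp(-s*ln u1)-1) <= (1-u1)*(exp(-s*ln u2)-1).
Proof.
  intros H2 H21 H1 Hs.
  set (w1 := exp (-s*ln u1)). set (D := s*w1/u1).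
  assert (T1 : w1 - D*(1-u1) <= 1).
  { pose proof (tangent s 1 u1). rewrite ln_1 in H. replace (-s*0) with 0 in H by ring.
    rewrite exp_0 in H. unfold D. unfold w1. unfold Rdiv in *. lra. }
  assert (T2 : w1 - D*(u2-u1) <= exp (-s*ln u2)).
  { pose proof (tangent s u2 u1). unfold D, w1. unfold Rdiv in *. lra. }
  assert (0 <= u1 - u2) by lra.
  assert ((u1-u2)*(w1 - 1) <= (u1-u2)*(D*(1-u1))) by (apply Rmult_le_compat_l; lra).
  nra.
Qed.

Definition Cf (t th : R) := exp (t * ln (cos th)).
Definition Sf (t th : R) := sqrt (1 - Cf t th ^ 2).
Definition Qf (t d a : R) := Cf t a * Cf t (a + d) + Sf t a * Sf t (a + d).
Definition pf (t th : R) := t * Cf t th * sin th / (cos th * Sf t th).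

Lemma Qf_derive t d a : 0 < cos a -> 0 < cos (a+d) -> 0 < 1 - Cf t a ^ 2 -> 0 < 1 - Cf t (a+d) ^ 2 ->
  is_derive (Qf t d) a ((pf t a - pf t (a+d)) * (Cf t a * Sf t (a+d) - Sf t a * Cf t (a+d))).
Proof.
  intros H1 H2 H3 H4.
  unfold Qf, pf, Sf, Cf in *.
  auto_derive.
  - repeat split; auto.
  - set (ea := exp (t * ln (cos a))) in *. set (eb := exp (t * ln (cos (a+d)))) in *.
    replace (1 + - (ea * (ea * 1))) with (1 - ea^2) by ring.
    replace (1 + - (eb * (eb * 1))) with (1 - eb^2) by ring.
    assert (0 < sqrt (1 - ea^2)) by (apply sqrt_lt_R0; lra).
    assert (0 < sqrt (1 - eb^2)) by (apply sqrt_lt_R0; lra).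
    field. repeat split; lra.
Qed.

Lemma cont_of_derive (f : R -> R) x : ex_derive f x -> continuity_pt f x.
Proof. intros H. apply continuity_pt_filterlim. exact (ex_derive_continuous f x H). Qed.

Lemma Cf_le1 t th : 0 <= t -> 0 < cos th -> 0 < Cf t th <= 1.
Proof.
  intros Ht Hc. unfold Cf. split; [apply exp_pos|].
  rewrite <- exp_0. assert (ln (cos th) <= 0).
  { rewrite <- ln_1. destruct (Rle_lt_or_eq_dec (cos th) 1) as [h|h]; [apply COS_bound| |].
    left; apply ln_increasing; lra. rewrite h; lra. }
  destruct (Rle_lt_or_eq_dec (t * ln (cos th)) 0) as [h|h]; [nra| left; apply exp_increasing; lra | rewrite h; lra].
Qed.

Lemma Qf_cont t d x : 0 <= t -> 0 < cos x -> 0 < cos (x+d) -> continuity_pt (Qf t d) x.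
Proof.
  intros Ht H1 H2. unfold Qf.
  apply continuity_pt_plus.
  - apply cont_of_derive. unfold Cf. auto_derive. repeat split; lra.
  - apply continuity_pt_mult.
    + unfold Sf. apply (continuity_pt_comp (fun a => 1 - Cf t a ^ 2) sqrt).
      * apply cont_of_derive. unfold Cf. auto_derive. repeat split; lra.
      * apply continuity_pt_sqrt. pose proof (Cf_le1 t x Ht H1). nra.
    + unfold Sf. apply (continuity_pt_comp (fun a => 1 - Cf t (a+d) ^ 2) sqrt).
      * apply cont_of_derive. unfold Cf. auto_derive. repeat split; lra.
      * apply continuity_pt_sqrt. pose proof (Cf_le1 t (x+d) Ht H2). nra.
Qed.

Lemma pf_facts t th : 1 <= t -> 0 < th < PI/2 ->
  let u := cos th ^ 2 in let V := exp (-(t-1) * ln u) in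
  0 <= pf t th /\ pf t th ^ 2 * (V - u) = t^2 * (1 - u) /\ 0 < V - u /\ 0 < u < 1
  /\ 0 < Cf t th < 1 /\ 0 < Sf t th.
Proof.
  intros Ht Hth u V.
  assert (Hc : 0 < cos th) by (apply cos_gt_0; lra).
  assert (Hs : 0 < sin th) by (apply sin_gt_0; pose proof PI_RGT_0; lra).
  assert (Hc1 : cos th < 1) by (rewrite <- cos_0; apply cos_decreasing_1; pose proof PI_RGT_0; lra).
  set (L := ln (cos th)).
  assert (HL : L < 0) by (unfold L; rewrite <- ln_1; apply ln_increasing; lra).
  assert (HC : 0 < Cf t th < 1).
  { unfold Cf. fold L. split; [apply exp_pos|]. rewrite <- exp_0. apply exp_increasing. nra. }
  assert (HVC : V * Cf t th ^ 2 = u).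
  { unfold V, u, Cf. fold L. rewrite ln_pow by lra. fold L.
    replace (INR 2) with 2 by (simpl; ring).
    rewrite <- !Rsqr_pow2. unfold Rsqr. rewrite <- !exp_plus.
    replace (cos th * cos th) with (exp L * exp L) by (unfold L; rewrite exp_ln; lra).
    rewrite <- exp_plus. f_equal. ring. }
  assert (HV : 0 < V) by apply exp_pos.
  assert (HS2 : Sf t th ^ 2 = 1 - Cf t th ^ 2).
  { unfold Sf. rewrite <- Rsqr_pow2. apply Rsqr_sqrt. nra. }
  assert (HS : 0 < Sf t th) by (unfold Sf; apply sqrt_lt_R0; nra).
  assert (Hsin : sin th ^ 2 = 1 - u).
  { unfold u. rewrite <- !Rsqr_pow2. rewrite sin2. reflexivity. }
  assert (HVu : V - u = V * Sf t th ^ 2) by (rewrite HS2; rewrite <- HVC; ring).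
  assert (Hu : 0 < u < 1) by (unfold u; split; nra).
  split; [| split; [| split; [| split; [| split]]]]; auto.
  - unfold pf. apply Rmult_le_pos. 2: left; apply Rinv_0_lt_compat; nra.
    apply Rmult_le_pos; [| lra]. apply Rmult_le_pos; lra.
  - rewrite HVu. unfold pf.
    transitivity (t^2 * sin th ^ 2 * (V * Cf t th ^ 2) / cos th ^ 2).
    + field. split; lra.
    + rewrite HVC, Hsin. unfold u. field. lra.
  - rewrite HVu. apply Rmult_lt_0_compat; nra.
Qed.

Lemma sign_lem t c d : 1 <= t -> 0 < c -> 0 <= d -> c + d < PI/2 ->
  0 <= (pf t c - pf t (c+d)) * (Cf t c * Sf t (c+d) - Sf t c * Cf t (c+d)).
Proof.
  intros Ht Hc Hd Hcd.
  pose proof PI_RGT_0.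
  destruct (pf_facts t c) as [pc0 [pcE [pcV [pcu [pcC pcS]]]]]; [lra|lra|].
  destruct (pf_facts t (c+d)) as [pe0 [peE [peV [peu [peC peS]]]]]; [lra|lra|].
  assert (Hcos : cos (c+d) <= cos c).
  { destruct (Rle_lt_or_eq_dec 0 d Hd) as [h|h].
    - left; apply cos_decreasing_1; lra.
    - rewrite <- h, Rplus_0_r; lra. }
  assert (Hce : 0 < cos (c+d)) by (apply cos_gt_0; lra).
  assert (HCC : Cf t (c+d) <= Cf t c).
  { unfold Cf. apply exp_le'. apply Rmult_le_compat_l; [lra|]. apply ln_le'; lra. }
  assert (HSS : Sf t c <= Sf t (c+d)).
  { unfold Sf. apply sqrt_le_1_alt. nra. }
  assert (Hu : cos (c+d) ^ 2 <= cos c ^ 2) by nra.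
  pose proof (slope (t-1) (cos (c+d) ^ 2) (cos c ^ 2) ltac:(lra) Hu ltac:(lra) ltac:(lra)) as SL.
  set (u1 := cos c ^ 2) in *. set (u2 := cos (c+d) ^ 2) in *.
  set (V1 := exp (-(t-1) * ln u1)) in *. set (V2 := exp (-(t-1) * ln u2)) in *.
  set (pc := pf t c) in *. set (pe := pf t (c+d)) in *.
  assert (Hpp : pe ^ 2 <= pc ^ 2).
  { apply (Rmult_le_reg_r ((V1 - u1) * (V2 - u2))); [nra|].
    replace (pe ^ 2 * ((V1 - u1) * (V2 - u2))) with ((pe^2 * (V2 - u2)) * (V1 - u1)) by ring.
    replace (pc ^ 2 * ((V1 - u1) * (V2 - u2))) with ((pc^2 * (V1 - u1)) * (V2 - u2)) by ring.
    rewrite pcE, peE. nra. }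
  assert (pe <= pc) by nra.
  apply Rmult_le_pos; [lra|]. nra.
Qed.

Lemma core t a b : 1 <= t -> 0 < a <= b -> b < PI/2 ->
  Cf t (b - a) <= Cf t a * Cf t b + Sf t a * Sf t b.
Proof.
  intros Ht Hab Hb. pose proof PI_RGT_0.
  set (d := b - a).
  set (df := fun x => if Req_EM_T x 0 then 0 else
        (pf t x - pf t (x+d)) * (Cf t x * Sf t (x+d) - Sf t x * Cf t (x+d))).
  destruct (MVT_gen (Qf t d) 0 a df) as [c [Hc E]].
  - rewrite Rmin_left, Rmax_right by lra. intros x Hx.
    unfold df. destruct (Req_EM_T x 0) as [h|h]; [lra|].
    destruct (pf_facts t x) as [_ [_ [_ [_ [H1 H2]]]]]; [lra|lra|].
    destruct (pf_facts t (x+d)) as [_ [_ [_ [_ [H3 H4]]]]]; [lra|unfold d; lra|].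
    apply Qf_derive; try (apply cos_gt_0; unfold d; lra); nra.
  - rewrite Rmin_left, Rmax_right by lra. intros x Hx.
    apply Qf_cont; [lra| |]; apply cos_gt_0; unfold d; lra.
  - rewrite Rmin_left, Rmax_right in Hc by lra.
    assert (Hdf : 0 <= df c).
    { unfold df. destruct (Req_EM_T c 0) as [h|h]; [lra|].
      apply sign_lem; unfold d; lra. }
    assert (Q0 : Qf t d 0 = Cf t d).
    { unfold Qf. rewrite Rplus_0_l.
      assert (Cf t 0 = 1) by (unfold Cf; rewrite cos_0, ln_1, Rmult_0_r, exp_0; reflexivity).
      unfold Sf. rewrite H0. replace (1 - 1^2) with 0 by ring. rewrite sqrt_0. ring. }
    assert (Qa : Qf t d a = Cf t a * Cf t b + Sf t a * Sf t b).
    { unfold Qf. replace (a + d) with b by (unfold d; ring). reflexivity. }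
    rewrite <- Qa. rewrite Q0 in E. nra.
Qed.

Lemma Cf_rpow t th : 0 < cos th -> rpow (cos th) t = Cf t th.
Proof. intros H. rewrite rpow_pos by lra. reflexivity. Qed.

Lemma sin_acos' x : -1 <= x <= 1 -> sin (acos x) = sqrt (1 - x^2).
Proof. intros H. rewrite sin_acos by lra. rewrite Rsqr_pow2. reflexivity. Qed.

Lemma KL_ord t x y : 1 <= t -> 0 <= y <= x -> x <= 1 ->
  rpow (x*y + sqrt (1 - x^2) * sqrt (1 - y^2)) t <=
  rpow x t * rpow y t + sqrt (1 - rpow x t ^ 2) * sqrt (1 - rpow y t ^ 2).
Proof.
  intros Ht Hy Hx. pose proof PI_RGT_0.
  destruct (Req_EM_T y 0) as [Hy0|Hy0].
  - subst y. rewrite rpow_0. replace (1 - 0^2) with 1 by ring. rewrite sqrt_1.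
    replace (x * 0 + sqrt (1 - x^2) * 1) with (sqrt (1 - x^2)) by ring.
    replace (rpow x t * 0 + sqrt (1 - rpow x t ^ 2) * 1) with (sqrt (1 - rpow x t ^ 2)) by ring.
    destruct (sq_sqrt1 x) as [E1 P1]; [nra|].
    rewrite <- (sqrt_pow2 (rpow (sqrt (1 - x^2)) t)) by apply rpow_nonneg.
    apply sqrt_le_1_alt. rewrite rpow_sq_base by auto. rewrite E1.
    rewrite rpow_sq_base by lra.
    pose proof (rpow_le_self (1 - x^2) t ltac:(nra) Ht).
    pose proof (rpow_le_self (x^2) t ltac:(nra) Ht). lra.
  - destruct (Req_EM_T x 1) as [Hx1|Hx1].
    + subst x. rewrite rpow_1. replace (1 - 1^2) with 0 by ring. rewrite sqrt_0. replace (1 * y + 0 * sqrt (1 - y ^ 2)) with y by ring. right; ring.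
    + set (a := acos x). set (b := acos y).
      assert (Ex : cos a = x) by (apply cos_acos; lra).
      assert (Ey : cos b = y) by (apply cos_acos; lra).
      assert (Sx : sin a = sqrt (1 - x^2)) by (apply sin_acos'; lra).
      assert (Sy : sin b = sqrt (1 - y^2)) by (apply sin_acos'; lra).
      pose proof (acos_bound x) as Ba. pose proof (acos_bound y) as Bb. fold a b in Ba, Bb.
      assert (Ha0 : 0 < a).
      { destruct (Rle_lt_or_eq_dec 0 a) as [h|h]; [lra|lra|]. rewrite <- h, cos_0 in Ex. lra. }
      assert (Hb2 : b < PI/2).
      { destruct (Rlt_le_dec b (PI/2)) as [h|h]; [exact h|].
        pose proof (cos_le_0 b h ltac:(lra)). lra. }
      assert (Hab : a <= b).
      { destruct (Rle_lt_dec a b) as [h|h]; [exact h|].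
        pose proof (cos_decreasing_1 b a ltac:(lra) ltac:(lra) ltac:(lra) ltac:(lra) h). lra. }
      assert (EG : x*y + sqrt (1 - x^2) * sqrt (1 - y^2) = cos (b - a)).
      { rewrite cos_minus, Ex, Ey, Sx, Sy. ring. }
      rewrite EG.
      rewrite Cf_rpow by (apply cos_gt_0; lra).
      rewrite <- Ex, <- Ey. rewrite !Cf_rpow by (apply cos_gt_0; lra).
      apply core; lra.
Qed.

Lemma KL t x y : 1 <= t -> 0 <= x <= 1 -> 0 <= y <= 1 ->
  rpow (x*y + sqrt (1 - x^2) * sqrt (1 - y^2)) t <=
  rpow x t * rpow y t + sqrt (1 - rpow x t ^ 2) * sqrt (1 - rpow y t ^ 2).
Proof.
  intros Ht Hx Hy. destruct (Rle_lt_dec y x) as [h|h].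
  - apply KL_ord; lra.
  - replace (x*y + sqrt (1 - x^2) * sqrt (1 - y^2)) with (y*x + sqrt (1 - y^2) * sqrt (1 - x^2)) by ring.
    replace (rpow x t * rpow y t + sqrt (1 - rpow x t ^ 2) * sqrt (1 - rpow y t ^ 2))
      with (rpow y t * rpow x t + sqrt (1 - rpow y t ^ 2) * sqrt (1 - rpow x t ^ 2)) by ring.
    apply KL_ord; lra.
Qed.

Lemma ML t x y z : 1 <= t -> 0 <= x <= 1 -> 0 <= y <= 1 -> 0 <= z ->
  z <= x*y + sqrt (1 - x^2) * sqrt (1 - y^2) ->
  (rpow x t ^ 2 - rpow y t ^ 2)^2 + rpow z t ^ 2 <= 1.
Proof.
  intros Ht Hx Hy Hz H.
  apply L2.
  - split; [apply rpow_nonneg | apply rpow_le1; lra].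
  - split; [apply rpow_nonneg | apply rpow_le1; lra].
  - apply rpow_nonneg.
  - eapply Rle_trans; [| apply KL; auto]. apply rpow_mono; lra.
Qed.

Lemma one_sub_pow z n : 0 <= z <= 1 -> 1 - z ^ n <= INR n * (1 - z).
Proof.
  intros Hz. induction n as [|n IH].
  - simpl. lra.
  - rewrite S_INR. simpl. assert (0 <= z^n <= 1) by (split; [apply pow_le; lra | rewrite <- (pow1 n); apply pow_incr; lra]).
    nra.
Qed.

Lemma abs_le_sqrt w r : w^2 <= r -> Rabs w <= sqrt r.
Proof. intros H. rewrite <- (sqrt_pow2 (Rabs w)) by apply Rabs_pos. apply sqrt_le_1_alt. rewrite pow2_abs. exact H. Qed.

Theorem corollary4 :
  (forall a b c : R, psd3 (Bmat a b c) ->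
     Rabs (Rabs a - Rabs b) <= sqrt (1 - Rabs c ^ 2) /\
     sqrt (1 - Rabs c ^ 2) <= sqrt 2 * sqrt (1 - Rabs c) /\
     (forall k : R, 2 <= k ->
        Rabs (rpow (Rabs a) k - rpow (Rabs b) k) <= sqrt (1 - rpow (Rabs c) k)))
  /\
  (forall alpha beta gamma : R,
     0 <= alpha <= PI / 2 -> 0 <= beta <= PI / 2 -> 0 <= gamma <= PI / 2 ->
     Rabs (alpha - beta) <= gamma -> gamma <= alpha + beta ->
     forall k : nat, (1 <= k)%nat ->
       Rabs (cos alpha ^ k - cos beta ^ k) <= sqrt (INR k) * sin gamma).
Proof.
  split.
  - intros a b c H.
    destruct (psd_facts a b c H) as [Ha [Hb [Hc Hd]]].
    pose proof (zbound a b c Ha Hb Hd) as Z.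
    assert (Hx : 0 <= Rabs a <= 1) by (split; [apply Rabs_pos| rewrite <- (pow2_abs a) in Ha; pose proof (Rabs_pos a); nra]).
    assert (Hy : 0 <= Rabs b <= 1) by (split; [apply Rabs_pos| rewrite <- (pow2_abs b) in Hb; pose proof (Rabs_pos b); nra]).
    assert (Hz : 0 <= Rabs c <= 1) by (split; [apply Rabs_pos| rewrite <- (pow2_abs c) in Hc; pose proof (Rabs_pos c); nra]).
    split; [| split].
    + apply abs_le_sqrt. apply L1; auto. apply Rabs_pos.
    + rewrite <- sqrt_mult by lra. apply sqrt_le_1_alt. nra.
    + intros k Hk.
      replace k with (2 * (k/2)) by field.
      rewrite !rpow_sq by apply Rabs_pos.
      apply abs_le_sqrt.
      pose proof (ML (k/2) (Rabs a) (Rabs b) (Rabs c) ltac:(lra) Hx Hy (Rabs_pos c) Z). lra.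
  - intros al be ga Ha Hb Hg H1 H2 k Hk.
    pose proof PI_RGT_0.
    set (x := cos al). set (y := cos be). set (z := cos ga).
    assert (Hx : 0 <= x <= 1) by (split; [apply cos_ge_0; lra| apply COS_bound]).
    assert (Hy : 0 <= y <= 1) by (split; [apply cos_ge_0; lra| apply COS_bound]).
    assert (Hz : 0 <= z <= 1) by (split; [apply cos_ge_0; lra| apply COS_bound]).
    assert (sq : forall th, 0 <= th <= PI/2 -> sin th = sqrt (1 - cos th ^ 2)).
    { intros th Hth. assert (0 <= sin th) by (apply sin_ge_0; lra).
      rewrite <- (sqrt_pow2 (sin th)) by lra. f_equal.
      rewrite <- !Rsqr_pow2. rewrite sin2. reflexivity. }
    assert (Zb : z <= x*y + sqrt (1 - x^2) * sqrt (1 - y^2)).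
    { unfold x, y. rewrite <- !sq by lra. rewrite <- cos_minus.
      replace (cos (al - be)) with (cos (Rabs (al - be))).
      2:{ unfold Rabs. destruct (Rcase_abs (al - be)); [rewrite cos_neg|]; reflexivity. }
      unfold z. destruct (Rle_lt_or_eq_dec _ _ H1) as [h|h].
      - assert (0 <= Rabs (al - be) <= PI) by (split; [apply Rabs_pos|]; unfold Rabs; destruct (Rcase_abs (al-be)); lra).
        apply Rlt_le. apply cos_decreasing_1; lra.
      - rewrite h; lra. }
    assert (Sg : sin ga = sqrt (1 - z^2)) by (apply sq; lra).
    rewrite Sg. fold x y.
    destruct (Nat.eq_dec k 1) as [E|E].
    + subst k. simpl INR. rewrite sqrt_1. rewrite !pow_1, Rmult_1_l.
      apply abs_le_sqrt. apply L1; lra.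
    + assert (Hk2 : 2 <= INR k) by (replace 2 with (INR 2) by (simpl; ring); apply le_INR; lia).
      pose proof (ML (INR k / 2) x y z ltac:(lra) Hx Hy ltac:(lra) Zb) as M.
      rewrite <- !rpow_sq in M by lra.
      replace (2 * (INR k / 2)) with (INR k) in M by field.
      rewrite !rpow_nat in M by (lra || lia).
      rewrite <- sqrt_mult by (try apply pos_INR; nra).
      apply abs_le_sqrt.
      pose proof (one_sub_pow z k Hz).
      assert (1 - z <= 1 - z^2) by nra.
      pose proof (pos_INR k).
      nra.
Qed.
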